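(* Let $k\ge 3$. A graph $G$ is $k$-chromatic and double-edge-critical if and only if $G$ is the complete graph $K_k$.
   Context: All graphs are finite and simple. A graph $G$ is (vertex-)critical if $\chi(G-v)<\chi(G)$ for every vertex $v$. A vertex-critical graph $G$ is double-edge-critical if $\chi(G-e_1-e_2)\le\chi(G)-2$ for any two non-incident edges $e_1,e_2\in E(G)$. *)

(* Defs.v *)
(* A finite simple graph is a symmetric irreflexive
   relation e : rel T on a finType T. *)
From mathcomp Require Import all_boot.
Set Implicit Arguments. Unset Strict Implicit. Unset Printing Implicit Defensive.

Section Graphs.
Variable T : finType.

(* Colours are taken in 'I_#|T| (w.l.o.g.,
   since at most #|T| colours are ever needed), which makes this decidable. *)
Definition colorable (e : rel T) (A : {set T}) (k : nat) : bool :=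
  [exists f : {ffun T -> 'I_#|T|},
     [forall x in A, f x < k] &&
     [forall x in A, forall y in A, ((x != y) && e x y) ==> (f x != f y)]].

Lemma colorable_card (e : rel T) (A : {set T}) : colorable e A #|T|.
Proof.
apply/existsP; exists [ffun x => enum_rank x]; apply/andP; split.
  by apply/forallP => x; apply/implyP => _; rewrite ffunE ltn_ord.
apply/forallP => x; apply/implyP => _; apply/forallP => y; apply/implyP => _.
apply/implyP => /andP [nxy _]; rewrite !ffunE.
by apply: contra nxy => /eqP /enum_rank_inj ->.
Qed.

Lemma ex_colorable (e : rel T) (A : {set T}) : exists k, colorable e A k.
Proof. by exists #|T|; apply: colorable_card. Qed.

Definition chi (e : rel T) (A : {set T}) : nat := ex_minn (ex_colorable e A).

Definition chromatic_number (e : rel T) : nat := chi e setT.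

Definition vertex_critical (e : rel T) : Prop :=
  forall v : T, chi e (setT :\ v) < chromatic_number e.

Definition remove_two_edges (e : rel T) (a b c d : T) : rel T :=
  fun x y => [&& e x y, [set x; y] != [set a; b] & [set x; y] != [set c; d]].

Definition nonincident_edges (e : rel T) (a b c d : T) : Prop :=
  [/\ e a b, e c d & [/\ a != c, a != d, b != c & b != d]].

Definition double_edge_critical (e : rel T) : Prop :=
  vertex_critical e /\
  forall a b c d : T, nonincident_edges e a b c d ->
    chromatic_number (remove_two_edges e a b c d) <= chromatic_number e - 2.

Definition is_complete_graph (e : rel T) (k : nat) : Prop :=
  #|T| = k /\ forall x y : T, x != y -> e x y.

End Graphs.

(* Main.v *)
Require Import Defs.
From mathcomp Require Import all_boot.
From mathcomp Require Import zify.
Set Implicit Arguments. Unset Strict Implicit. Unset Printing Implicit Defensive.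

Lemma colorable_mono (T : finType) (e : rel T) (A : {set T}) m m' :
  colorable e A m -> m <= m' -> colorable e A m'.
Proof.
case/existsP => f /andP [/forallP H1 H2] hm.
apply/existsP; exists f; rewrite H2 andbT; apply/forallP => x; apply/implyP => xA.
exact: leq_trans (implyP (H1 x) xA) hm.
Qed.

Definition ncol (T : finType) (e : rel T) (A : {set T}) k (f : T -> nat) :=
  (forall x, x \in A -> f x < k) /\
  (forall x y, x \in A -> y \in A -> x != y -> e x y -> f x != f y).

Lemma colorableP (T : finType) (e : rel T) (A : {set T}) k :
  colorable e A k <-> exists f, ncol e A k f.
Proof.
split.
  case/existsP => f /andP [/forallP H1 /forallP H2].
  exists (fun x => val (f x)); split.
    by move=> x xA; exact: (implyP (H1 x) xA).
  move=> x y xA yA nxy exy.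
  have := implyP (H2 x) xA => /forallP /(_ y) /implyP /(_ yA) /implyP.
  by move/(_ (introT andP (conj nxy exy))).
case=> f [H1 H2]; case: (leqP #|T| k) => hk.
  exact: colorable_mono (colorable_card e A) hk.
have H0 : 0 < #|T| by exact: leq_ltn_trans (leq0n k) hk.
apply/existsP; exists [ffun x => insubd (Ordinal H0) (f x)]; apply/andP; split.
  apply/forallP => x; apply/implyP => xA.
  by rewrite ffunE val_insubd (ltn_trans (H1 x xA) hk); exact: H1.
apply/forallP => x; apply/implyP => xA; apply/forallP => y; apply/implyP => yA.
apply/implyP => /andP [nxy exy].
rewrite !ffunE; apply/negP => /eqP /(congr1 val).
rewrite !val_insubd (ltn_trans (H1 x xA) hk) (ltn_trans (H1 y yA) hk) => /eqP.
by apply/negP; exact: H2.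
Qed.

Lemma chiP (T : finType) (e : rel T) (A : {set T}) : colorable e A (chi e A).
Proof. by rewrite /chi; case: ex_minnP. Qed.

Lemma chi_min (T : finType) (e : rel T) (A : {set T}) m :
  colorable e A m -> chi e A <= m.
Proof. by rewrite /chi; case: ex_minnP => n _ H; apply: H. Qed.

Lemma clique_chi (T : finType) (e : rel T) :
  (forall x y, x != y -> e x y) -> chromatic_number e = #|T|.
Proof.
move=> Hc; apply/eqP; rewrite eqn_leq chi_min ?colorable_card //=.
have /colorableP [f [H1 H2]] := chiP e setT.
rewrite /chromatic_number.
have inj : injective f.
  move=> x y fxy; apply/eqP; apply/negPn/negP => nxy.
  by move: (H2 x y (in_setT x) (in_setT y) nxy (Hc x y nxy)); rewrite fxy eqxx.
rewrite cardT -(size_map f) -(size_iota 0 (chi e setT)).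
apply: uniq_leq_size; first by rewrite map_inj_uniq ?enum_uniq.
move=> _ /mapP [x _ ->]; rewrite mem_iota add0n; exact: H1 (in_setT x).
Qed.

Lemma index_col (T : finType) (e : rel T) (A S : {set T}) (s : T -> T) :
  (forall x, x \in A -> s x \in S) ->
  (forall x y, x \in A -> y \in A -> x != y -> e x y -> s x != s y) ->
  colorable e A #|S|.
Proof.
move=> HS Hp; apply/colorableP; exists (fun x => index (s x) (enum S)); split.
  by move=> x xA; rewrite cardE index_mem mem_enum HS.
move=> x y xA yA nxy exy; apply: contra (Hp x y xA yA nxy exy) => /eqP h.
have mx : s x \in enum S by rewrite mem_enum HS.
have my : s y \in enum S by rewrite mem_enum HS.
by rewrite -(nth_index (s x) mx) h nth_index.
Qed.

Lemma nbr (T : finType) (e : rel T) k v u :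
  symmetric e -> 3 <= k -> chromatic_number e = k -> vertex_critical e ->
  exists w, e v w && (w != u).
Proof.
move=> sym k3 hk hcrit.
case: (boolP [exists w, e v w && (w != u)]) => [/existsP //|/existsPn H].
exfalso.
have hm := hcrit v; rewrite hk in hm.
have /colorableP [f [H1 H2]] := chiP e (setT :\ v).
pose g x := if x == v then (if f u == 0 then 1 else 0) else f x.
have : colorable e setT (k - 1).
  apply/colorableP; exists g; split.
    move=> x _; rewrite /g; case: ifP => [_|/negbT nxv].
      case: ifP => _; lia.
    have := H1 x; rewrite !inE nxv => /(_ isT); lia.
  move=> x y _ _ nxy exy; rewrite /g.
  case: (x =P v) => [xv|nxv].
    subst x; have -> : (y == v) = false by apply/negbTE; rewrite eq_sym.
    have := H y; rewrite exy /= negbK => /eqP yu; subst y.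
    by case: (f u =P 0) => [->|/eqP]; rewrite // eq_sym.
  case: (y =P v) => [yv|nyv].
    subst y; rewrite sym in exy.
    have := H x; rewrite exy /= negbK => /eqP xu; subst x.
    by case: (f u =P 0) => [->|/eqP].
  by apply: H2; rewrite // !inE; apply/andP; split => //; apply/eqP.
move/chi_min; rewrite -/(chromatic_number e) hk; lia.
Qed.

Lemma k4 (T : finType) (e : rel T) k a b c d :
  symmetric e -> 3 <= k -> chromatic_number e = k -> double_edge_critical e ->
  nonincident_edges e a b c d -> e a c.
Proof.
move=> sym k3 hk [_ hdec] hni.
case: (boolP (e a c)) => // nac; exfalso.
have h := hdec a b c d hni; rewrite hk in h.
have /colorableP [f [H1 H2]] := chiP (remove_two_edges e a b c d) setT.
pose g x := if (x == a) || (x == c) then k - 2 else f x.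
have : colorable e setT (k - 1).
  apply/colorableP; exists g; split.
    move=> x _; rewrite /g; case: ifP => _; first lia.
    have := H1 x (in_setT x); rewrite /chromatic_number in h; lia.
  move=> x y _ _ nxy exy; rewrite /g.
  have fx := H1 x (in_setT x); have fy := H1 y (in_setT y).
  rewrite /chromatic_number in h.
  case hx: ((x == a) || (x == c)); case hy: ((y == a) || (y == c)).
  - exfalso; move: hx hy nxy exy => /orP [] /eqP -> /orP [] /eqP ->;
      rewrite ?eqxx // => _ H.
      by rewrite H in nac.
    by rewrite sym H in nac.
  - apply/eqP; lia.
  - apply/eqP; lia.
  - apply: H2 => //; rewrite /remove_two_edges exy /=.
    apply/andP; split; apply/negP => /eqP hs.
      have : a \in [set x; y] by rewrite hs set21.
      by rewrite !inE !(eq_sym a) => /orP [] H; rewrite H ?orbT in hx hy.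
    have : c \in [set x; y] by rewrite hs set21.
    by rewrite !inE !(eq_sym c) => /orP [] H; rewrite H ?orbT in hx hy.
move/chi_min; rewrite -/(chromatic_number e) hk; lia.
Qed.

Lemma complete_dec (T : finType) (e : rel T) k :
  irreflexive e -> 3 <= k -> is_complete_graph e k -> double_edge_critical e.
Proof.
move=> irr k3 [hT Hc]; have hk : chromatic_number e = k by rewrite clique_chi.
split.
  move=> v; rewrite hk.
  have : colorable e (setT :\ v) #|setT :\ v|.
    by apply: (index_col (s := id)) => // x y _ _ nxy _.
  move/chi_min; have := cardsD1 v [set: T]; rewrite cardsT in_setT hT; lia.
move=> a b c d [eab ecd [nac nad nbc nbd]].
have nab : a != b by apply: contraTneq eab => ->; rewrite irr.
have ncd : c != d by apply: contraTneq ecd => ->; rewrite irr.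
rewrite hk.
pose s x := if x == b then a else if x == d then c else x.
have : colorable (remove_two_edges e a b c d) setT #|setT :\ b :\ d|.
  apply: (index_col (s := s)).
    move=> x _; rewrite /s !inE.
    case: (x =P b) => [_|/eqP nxb]; first by rewrite nad nab.
    case: (x =P d) => [_|/eqP nxd]; first by rewrite ncd (eq_sym c b) nbc.
    by rewrite nxd nxb.
  move=> x y _ _ nxy /and3P [_ h1 h2]; rewrite /s.
  case: (x =P b) => [xb|/eqP nxb]; case: (y =P b) => [yb|/eqP nyb];
  case: (x =P d) => [xd|/eqP nxd]; case: (y =P d) => [yd|/eqP nyd].
  all: try (apply/negP; move=> /eqP E).
  all: try by move: nxy; rewrite xb yb eqxx.
  all: try by move: nxy; rewrite xd yd eqxx.
  all: try by move: nbd; rewrite -xb xd eqxx.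
  all: try by move: nbd; rewrite -yb yd eqxx.
  all: try by move: nac; rewrite E eqxx.
  all: try by move: nac; rewrite -E eqxx.
  all: try by move: nxy; rewrite E eqxx.
  all: try by move: h1; rewrite xb -E setUC eqxx.
  all: try by move: h1; rewrite yb E eqxx.
  all: try by move: h2; rewrite xd -E setUC eqxx.
  all: try by move: h2; rewrite yd E eqxx.
move/chi_min; have := cardsD1 b [set: T]; have := cardsD1 d ([set: T] :\ b).
rewrite cardsT in_setT hT !inE eq_sym nbd /=; rewrite /chromatic_number; lia.
Qed.

Unset Implicit Arguments.

Theorem theorem33 (T : finType) (e : rel T) (k : nat) :
  symmetric e -> irreflexive e -> 3 <= k ->
  (chromatic_number e = k /\ double_edge_critical e) <-> is_complete_graph e k.
Proof.
move=> sym irr k3; split.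
  move=> [hk hdec].
  have Hc : forall x y : T, x != y -> e x y.
    move=> x y nxy; case: (boolP (e x y)) => // nexy.
    have [b /andP [eyb nbx]] := nbr y x sym k3 hk hdec.1.
    have [a /andP [exa nab]] := nbr x b sym k3 hk hdec.1.
    have := (@k4 T e k x a y b sym k3 hk hdec); rewrite (negbTE nexy); apply.
    split => //; split => //; first by rewrite eq_sym.
    by apply: contraTneq exa => ->.
  by split => //; rewrite -(clique_chi Hc) hk.
move=> hc; split; last exact: complete_dec hc.
by case: hc => hT Hc; rewrite clique_chi.
Qed.
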